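(* For integers $m,n\ge0$ let $p_m(t,n)=D_m(C(t);n)\in\mathbb Z[t]$. Then every $p_m(t,n)$ is a nonzero polynomial, $p_m(t,0)=1$, $p_m(t,1)=C_m(t)$, and for all $m\ge0$, $n\ge2$, $$p_m(t,n-1)p_{m+2}(t,n-1)-p_{m+1}(t,n-1)^2=p_m(t,n)\,p_{m+2}(t,n-2).$$ Consequently, if $(q_m(n))_{m,n\ge0}$ is any family of elements of the field $\mathbb Q(t)$ with $q_m(0)=1$, $q_m(1)=C_m(t)$ for all $m\ge0$ and $q_m(n-1)q_{m+2}(n-1)-q_{m+1}(n-1)^2=q_m(n)q_{m+2}(n-2)$ for all $m\ge0,n\ge2$, then $q_m(n)=p_m(t,n)$ for all $m,n\ge0$.
   Context: The Narayana polynomials are $C_0(t)=1$ and $C_n(t)=\sum_{k=0}^{n-1}\binom{n-1}{k}\binom{n}{k}\frac{1}{k+1}t^k$ for $n\ge1$ (so $C_n(1)$ is the Catalan number $C_n$); they are extended by $C_n(t)=0$ for $n<0$. For $m\in\mathbb Z$ and $n\ge0$, $D_m(C(t);n)=\det(C_{i+j+m}(t))_{i,j=0}^{n-1}$, the $0\times0$ determinant being $1$. *)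

(* Defs.v *)
From mathcomp Require Import all_boot all_order all_algebra fraction.
Set Implicit Arguments. Unset Strict Implicit. Unset Printing Implicit Defensive.
Import Order.TTheory GRing.Theory Num.Theory.
Local Open Scope ring_scope.

Definition narayana (n : nat) : {poly rat} :=
  if n is 0 then 1
  else \sum_(k < n) (('C(n.-1, k) * 'C(n, k))%:R / (k.+1)%:R) *: 'X^k.

Definition hankelD (m n : nat) : {poly rat} :=
  \det (\matrix_(i < n, j < n) narayana (i + j + m)).

Definition Qt := {fraction {poly rat}}.
Definition toQt (p : {poly rat}) : Qt := tofrac p.

(* Main.v *)
Require Import Defs.
From mathcomp Require Import all_boot all_order all_algebra fraction.
From mathcomp Require Import ring zify.
Set Implicit Arguments. Unset Strict Implicit. Unset Printing Implicit Defensive.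
Import Order.TTheory GRing.Theory Num.Theory.
From mathcomp Require Import fingroup perm.

Fixpoint bal (n k : nat) : nat :=
  if n is n'.+1 then (if k is k'.+1 then bal n' k' else 0) + bal n' k.+1
  else (k == 0).

Lemma bal_small n k : n < k -> bal n k = 0.
Proof.
elim: n k => [|n IH] [|k] //= h.
rewrite !IH //; lia.
Qed.

Lemma bal_nn n : bal n n = 1.
Proof. by elim: n => //= n ->; rewrite bal_small. Qed.

Lemma sum_recl N (f : nat -> nat) :
  \sum_(k < N.+1) f k = f 0 + \sum_(k < N) f k.+1.
Proof. exact: big_ord_recl. Qed.

Lemma sum_recr N (f : nat -> nat) :
  \sum_(k < N.+1) f k = \sum_(k < N) f k + f N.
Proof. exact: big_ord_recr. Qed.

Lemma bal_shift N a c : a < N -> c < N ->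
  \sum_(k < N) bal a.+1 k * bal c k = \sum_(k < N) bal a k * bal c.+1 k.
Proof.
case: N => [//|N] ha hc.
rewrite (sum_recl N (fun k => bal a.+1 k * bal c k)).
rewrite (sum_recl N (fun k => bal a k * bal c.+1 k)) /=.
under eq_bigr do rewrite mulnDl.
under [in RHS]eq_bigr do rewrite mulnDr.
rewrite !big_split /= !add0n.
case: N ha hc => [|N] ha hc.
  by move: ha hc; rewrite !big_ord0 !ltnS !leqn0 => /eqP-> /eqP->.
rewrite (sum_recl N (fun k => bal a k * bal c k.+1)).
rewrite (sum_recl N (fun k => bal a k.+1 * bal c k)).
rewrite (sum_recr N (fun k => bal a k.+2 * bal c k.+1)).
rewrite (sum_recr N (fun k => bal a k.+1 * bal c k.+2)) /=.
rewrite (bal_small (n:=a) (k:=N.+2)) ?(bal_small (n:=c) (k:=N.+2)); try lia.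
Qed.

Lemma bal_gram N a c : a + c < N ->
  \sum_(k < N) bal a k * bal c k = bal (a + c) 0.
Proof.
elim: a c => [|a IH] c h.
  case: N h => [//|N] h.
  rewrite (sum_recl N (fun k => bal 0 k * bal c k)) /= mul1n big1 ?addn0 //.
rewrite bal_shift; try lia.
by rewrite IH ?addSnnS //; lia.
Qed.

Definition cm n d := if d is d'.+1 then 'C(n, d') else 0.

Lemma binS_cm n d : 'C(n.+1, d) = 'C(n, d) + cm n d.
Proof. by case: d => [|d] //=; rewrite !bin0 addn0. Qed.

Lemma bal_closed n k d : k + d.*2 = n -> bal n k + cm n d = 'C(n, d).
Proof.
elim: n k d => [|n IH] k d.
  by case: k => //; case: d.
case: k => [|k] /= e.
  case: d e => [|d] e; first by lia.
  have := IH 1 d; rewrite /= => h.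
  rewrite binS binS_cm add0n.
  have -> : 'C(n, d.+1) = 'C(n, d).
    by rewrite -(bin_sub (n:=n) (m:=d)); [congr 'C(_, _)|]; lia.
  rewrite -h; last by lia.
  by rewrite /cm; lia.
case: d e => [|d] e.
  rewrite (bal_small (n := n) (k := k.+2)) /=; last by lia.
  have := IH k 0 ltac:(lia); rewrite /= !bin0 !addn0 => -> //.
have h1 := IH k d.+1 ltac:(lia); have h2 := IH k.+2 d ltac:(lia).
move: h1 h2; rewrite /cm binS binS_cm /cm; lia.
Qed.

Lemma bal_catalan d : bal d.*2 0 * d.+1 = 'C(d.*2, d).
Proof.
have h := bal_closed (n := d.*2) (k := 0) (d := d) (esym (add0n _)).
case: d h => [|d] h; first by [].
move: h; rewrite /= => h.
have h2 := mul_bin_left (d.+1).*2 d.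
have e : (d.+1).*2 - d = d.+2 by lia.
rewrite e in h2.
nia.
Qed.

Lemma vand_cat n : \sum_(k < n.+1) 'C(n, k) * 'C(n.+2, k.+1) = 'C((n.+1).*2, n.+1).
Proof.
have := binomial.Vandermonde n n.+2 n.+1.
rewrite big_ord_recr /= bin_small // mul0n addn0.
have -> : (n + n.+2 = (n.+1).*2)%N by lia.
move=> <-.
apply: eq_bigr => k _; congr (_ * _).
rewrite -(bin_sub (n := n.+2) (m := k.+1)); last by have := ltn_ord k; lia.
congr 'C(_, _); have := ltn_ord k; lia.
Qed.

Local Open Scope ring_scope.
Section Perm.
Variable R : comRingType.

Lemma det_row_perm n (s : 'S_n) (X : 'M[R]_n) :
  \det (row_perm s X) = (-1) ^+ s * \det X.
Proof. by rewrite row_permE det_mulmx det_perm. Qed.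

Lemma det_col_perm n (s : 'S_n) (X : 'M[R]_n) :
  \det (col_perm s X) = (-1) ^+ s * \det X.
Proof. by rewrite col_permE det_mulmx det_perm odd_permV mulrC. Qed.

Lemma det_sim_perm n (s : 'S_n) (X : 'M[R]_n) :
  \det (\matrix_(i, j) X (s i) (s j)) = \det X.
Proof.
have -> : \matrix_(i, j) X (s i) (s j) = col_perm s (row_perm s X).
  by apply/matrixP => i j; rewrite !mxE.
by rewrite det_col_perm det_row_perm mulrA -expr2 sqrr_sign mul1r.
Qed.
End Perm.
Section DJ.
Variable F : fieldType.

Lemma schur p k (a : 'M[F]_p) (b : 'M[F]_(p,k)) (c : 'M[F]_(k,p)) (M : 'M[F]_k) :
  M \in unitmx -> \det (block_mx a b c M) = \det M * \det (a - b *m invmx M *m c).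
Proof.
move=> uM.
have -> : block_mx a b c M = block_mx 1%:M (b *m invmx M) 0 1%:M *m
     block_mx (a - b *m invmx M *m c) 0 c M.
  rewrite mulmx_block !mul1mx !mul0mx ?mulmx0 ?add0r ?addr0 ?mul1mx ?mulmx1.
  idtac.
  by rewrite -[b *m invmx M *m M]mulmxA mulVmx // mulmx1 subrK.
by rewrite det_mulmx det_ublock det_lblock !det1 !mul1r mulrC.
Qed.

Lemma det2 (A : 'M[F]_2) : \det A = A 0 0 * A 1 1 - A 0 1 * A 1 0.
Proof.
rewrite (expand_det_row _ 0) !big_ord_recl big_ord0 addr0 /cofactor !det_mx11 /=.
rewrite !mxE /= expr0 expr1 mul1r mulN1r.
rewrite mulrN; congr (_ * A _ _ - _ * A _ _).
all: try by apply: val_inj.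
by congr (A _ _); apply: val_inj.
Qed.

End DJ.

Section DJ2.
Variable F : fieldType.

Lemma entry_rc m n p (X : 'M[F]_(m,n)) (Y : 'M[F]_(n,p)) i j :
  (row i X *m col j Y) 0 0 = (X *m Y) i j.
Proof. by rewrite !mxE; apply: eq_bigr => l _; rewrite !mxE. Qed.

Lemma detK k (D : 'M[F]_2) (C : 'M[F]_(2,k)) (B : 'M[F]_(k,2)) (M : 'M[F]_k) i j :
  M \in unitmx ->
  \det (block_mx (D i j)%:M (row i C) (col j B) M : 'M_(1+k))
   = \det M * (D - C *m invmx M *m B) i j.
Proof.
move=> uM; rewrite schur // det_mx11 !mxE /= mulr1n.
by rewrite -row_mul; congr (_ * (_ - _)); apply: eq_bigr => l _; rewrite !mxE.
Qed.

Lemma DJ k (D : 'M[F]_2) (C : 'M[F]_(2,k)) (B : 'M[F]_(k,2)) (M : 'M[F]_k) :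
  M \in unitmx ->
  \det (block_mx D C B M) * \det M =
    \det (block_mx (D 0 0)%:M (row 0 C) (col 0 B) M : 'M_(1+k)) *
    \det (block_mx (D 1 1)%:M (row 1 C) (col 1 B) M : 'M_(1+k)) -
    \det (block_mx (D 0 1)%:M (row 0 C) (col 1 B) M : 'M_(1+k)) *
    \det (block_mx (D 1 0)%:M (row 1 C) (col 0 B) M : 'M_(1+k)).
Proof.
move=> uM; rewrite !detK // schur // det2.
ring.
Qed.
End DJ2.

Section Hankel.
Variable F : fieldType.
Variable c : nat -> F.

Definition H (m n : nat) : 'M[F]_n := \matrix_(i < n, j < n) c (i + j + m).

Lemma rot_inj k : injective (fun i : 'I_k.+1 => inord (if i == 0 :> nat then k else i.-1) : 'I_k.+1).
Proof.
move=> i j /(congr1 val) /=.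
have hi := ltn_ord i; have hj := ltn_ord j.
rewrite !inordK; last 2 first.
- by case: (j == 0 :> nat); lia.
- by case: (i == 0 :> nat); lia.
move=> e; apply: val_inj => /=.
move: e; case: (eqVneq (i:nat) 0) => ei; case: (eqVneq (j:nat) 0) => ej; lia.
Qed.

Lemma s_inj k : injective (fun i : 'I_k.+2 =>
   inord (if i == 0 :> nat then 0 else if i == 1 :> nat then k.+1 else i.-1) : 'I_k.+2).
Proof.
move=> i j /(congr1 val) /=.
have hi := ltn_ord i; have hj := ltn_ord j.
rewrite !inordK; last 2 first.
- by case: eqVneq => h; [|case: eqVneq => h']; lia.
- by case: eqVneq => h; [|case: eqVneq => h']; lia.
move=> e; apply: val_inj => /=.
move: e; case: eqVneq => h; [|case: eqVneq => h'];
  case: eqVneq => g; try (case: eqVneq => g'); lia.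
Qed.


Lemma hankel_DJ k m : \det (H m.+2 k) != 0 ->
  \det (H m k.+2) * \det (H m.+2 k) =
  \det (H m k.+1) * \det (H m.+2 k.+1) - \det (H m.+1 k.+1) ^+ 2.
Proof.
move=> nz.
pose e (i : nat) := if i == 0 then 0%N else k.+1.
pose D : 'M[F]_2 := \matrix_(i, j) c (e i + e j + m).
pose C : 'M[F]_(2,k) := \matrix_(i, j) c (e i + j.+1 + m).
pose B : 'M[F]_(k,2) := \matrix_(i, j) c (i.+1 + e j + m).
pose M := H m.+2 k.
have uM : M \in unitmx by rewrite unitmxE unitfE.
have := DJ D C B uM.
have eA : \det (block_mx D C B M) = \det (H m k.+2).
  rewrite -[RHS](det_sim_perm (perm (@s_inj k))); congr (\det _); apply/matrixP => i j.
  rewrite !mxE !permE /=.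
  have hl : forall x : 'I_(2 + k),
      ((if x == 0 :> nat then 0 else if x == 1 :> nat then k.+1 else x.-1) < k.+2)%N.
    by move=> x; have := ltn_ord x; case: eqVneq => ?; [|case: eqVneq => ?]; lia.
  rewrite (inordK (hl i)) (inordK (hl j)).
  case: splitP => a ea; rewrite !mxE; case: splitP => b eb; rewrite !mxE;
    rewrite ea eb; congr c; rewrite /e.
  - by case: a {ea} => [[|[|?]] ?]; case: b {eb} => [[|[|?]] ?].
  - by case: a {ea} => [[|[|?]] ?] //= _; lia.
  - by case: b {eb} => [[|[|?]] ?] //= _; lia.
  - rewrite !add2n /=; lia.
  pose r := perm (@rot_inj k).
  have hr : forall x : 'I_(1 + k),
      ((if x == 0 :> nat then k else x.-1) < k.+1)%N.
    by move=> x; have := ltn_ord x; case: eqVneq => ?; lia.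
  have e00 : block_mx (D 0 0)%:M (row 0 C) (col 0 B) M = H m k.+1.
    apply/matrixP => i j; rewrite !mxE.
    case: splitP => a ea; rewrite !mxE; case: splitP => b eb; rewrite !mxE;
      rewrite ?(ord1 a) ?(ord1 b) ?eqxx ?mulr1n ea eb ?(ord1 a) ?(ord1 b); congr c; rewrite /e /=; lia.
  have e11 : block_mx (D 1 1)%:M (row 1 C) (col 1 B) M =
      \matrix_(i, j) H m.+2 k.+1 (r i) (r j).
    apply/matrixP => i j; rewrite !mxE !permE /= (inordK (hr i)) (inordK (hr j)).
    case: splitP => a ea; rewrite !mxE; case: splitP => b eb; rewrite !mxE;
      rewrite ?(ord1 a) ?(ord1 b) ?eqxx ?mulr1n ea eb ?(ord1 a) ?(ord1 b); congr c; rewrite /e /= ?add1n /=; lia.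
  have e01 : block_mx (D 0 1)%:M (row 0 C) (col 1 B) M = col_perm r (H m.+1 k.+1).
    apply/matrixP => i j; rewrite !mxE !permE /= (inordK (hr j)).
    case: splitP => a ea; rewrite !mxE; case: splitP => b eb; rewrite !mxE;
      rewrite ?(ord1 a) ?(ord1 b) ?eqxx ?mulr1n ea eb ?(ord1 a) ?(ord1 b); congr c; rewrite /e /= ?add1n /=; lia.
  have e10 : block_mx (D 1 0)%:M (row 1 C) (col 0 B) M = row_perm r (H m.+1 k.+1).
    apply/matrixP => i j; rewrite !mxE !permE /= (inordK (hr i)).
    case: splitP => a ea; rewrite !mxE; case: splitP => b eb; rewrite !mxE;
      rewrite ?(ord1 a) ?(ord1 b) ?eqxx ?mulr1n ea eb ?(ord1 a) ?(ord1 b); congr c; rewrite /e /= ?add1n /=; lia.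
  rewrite e00 e11 e01 e10 det_sim_perm det_col_perm det_row_perm eA => ->.
  by rewrite mulrACA -[(-1) ^+ r * _]expr2 sqrr_sign mul1r expr2.
Qed.
End Hankel.

Lemma narayana1 n : (narayana n).[1] * (n.+1)%:R = ('C(n.*2, n))%:R :> rat.
Proof.
case: n => [|n]; first by rewrite /narayana /= mulr1 -[1 : {poly rat}]polyC1 hornerC.
rewrite /narayana /= horner_sum mulr_suml -vand_cat natr_sum.
apply: eq_bigr => k _.
rewrite hornerZ hornerXn expr1n mulr1 /=.
have := mul_bin_diag n.+2 k; rewrite /= => h.
have h' : ('C(n.+2, k.+1))%:R = ('C(n.+1, k))%:R * (n.+2)%:R / (k.+1)%:R :> rat.
  rewrite -natrM mulnC h natrM.
  by rewrite [_ * _%:R]mulrC mulfK // pnatr_eq0.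
rewrite !natrM h'; field.
by rewrite addrC natr1 pnatr_eq0.
Qed.

Lemma nar_bal n : (narayana n).[1] = (bal n.*2 0)%:R :> rat.
Proof.
apply: (mulIf (x := (n.+1)%:R)); first by rewrite pnatr_eq0.
by rewrite narayana1 -natrM bal_catalan.
Qed.

Definition cb (j : nat) : rat := (bal j.*2 0)%:R.

Lemma hankel1_nz m n : \det (H cb m n) != 0.
Proof.
pose r := m./2; pose e := odd m.
have em : (e + r.*2 = m)%N by rewrite /e /r odd_double_half.
pose N := ((n + m) * 4).+1.
pose a (i : nat) := ((i + r).*2 + e)%N.
have aN : forall i : 'I_n, (a i < N)%N by move=> i; have := ltn_ord i; rewrite /a /N; lia.
pose V : 'M[rat]_(n, N) := \matrix_(i, k) (bal (a i) k)%:R.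
have HV : H cb m n = V *m V^T.
  apply/matrixP => i j; rewrite !mxE /cb.
  under eq_bigr do rewrite !mxE -natrM.
  rewrite -natr_sum bal_gram; last by have := ltn_ord i; have := ltn_ord j; rewrite /a /N; lia.
  congr (bal _ _)%:R; rewrite /a; lia.
apply/negP => /det0P [x xnz xH].
have y0 : x *m V = 0.
  have q : ((x *m V) *m (x *m V)^T) 0 0 = 0.
    by rewrite trmx_mul mulmxA -(mulmxA x) -HV xH mul0mx mxE.
  rewrite mxE in q.
  have hz : forall k, (x *m V) 0 k * (x *m V)^T k 0 = 0.
    move=> k; apply: (psumr_eq0P _ q) => // l _.
    by rewrite [(x *m V)^T _ _]mxE -expr2 sqr_ge0.
  apply/rowP => k; have := hz k.
  rewrite [(x *m V)^T _ _]mxE => /eqP; rewrite mulf_eq0 orbb => /eqP ->; by rewrite mxE.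
have key : forall d (j : 'I_n), (n - d <= j)%N -> x 0 j = 0.
  elim=> [|d IH] j hj; first by have := ltn_ord j; lia.
  case: (leqP (n - d) j) => h; first exact: IH.
  have := congr1 (fun M : 'M[rat]_(1, N) => M 0 (Ordinal (aN j))) y0.
  rewrite !mxE (bigD1 j) //= big1 ?addr0.
    by rewrite !mxE bal_nn mulr1.
  move=> l hl; rewrite !mxE.
  case: (ltngtP l j) => hlj.
  - by rewrite bal_small ?mulr0 //= /a; lia.
  - by rewrite IH ?mul0r //; lia.
  - by move/eqP: hl; case; apply: val_inj.
apply: (negP xnz); apply/eqP/rowP => j; rewrite mxE.
by apply: (key n); lia.
Qed.

Lemma nar_div n k : (k <= n)%N ->
  ('C(n, k) * 'C(n.+1, k) = k.+1 * ('C(n, k) * 'C(n.+1, k) - 'C(n.+1, k.+1) * cm n k))%N.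
Proof.
move=> hk.
have h : (k.+1 * ('C(n.+1, k.+1) * cm n k) = k * ('C(n, k) * 'C(n.+1, k)))%N.
  case: k hk => [|k] hk; first by rewrite /= !muln0.
  rewrite /= mulnA mul_bin_left.
  have h2 := mul_bin_left n k.
  have e : (n.+1 - k.+1 = n - k)%N by lia.
  rewrite e; nia.
nia.
Qed.
Local Open Scope ring_scope.
Notation pOI := (polyOver Num.int).
Lemma pOD (p q : {poly rat}) : p \is a pOI -> q \is a pOI -> p + q \is a pOI.
Proof. by move=> /polyOverP hp /polyOverP hq; apply/polyOverP => i; rewrite coefD rpredD. Qed.
Lemma pON (p : {poly rat}) : p \is a pOI -> - p \is a pOI.
Proof. by move=> /polyOverP hp; apply/polyOverP => i; rewrite coefN rpredN. Qed.
Lemma pOM (p q : {poly rat}) : p \is a pOI -> q \is a pOI -> p * q \is a pOI.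
Proof.
move=> /polyOverP hp /polyOverP hq; apply/polyOverP => i; rewrite coefM.
by apply: rpred_sum => j _; rewrite rpredM.
Qed.
Lemma pO1 : (1 : {poly rat}) \is a pOI.
Proof. by rewrite -polyC1 polyOverC; exact: (natr_int _ 1). Qed.
Lemma pO0 : (0 : {poly rat}) \is a pOI.
Proof. exact: polyOver0. Qed.
Lemma pO_sum (I : Type) (r : seq I) (P : pred I) (F : I -> {poly rat}) :
  (forall i, P i -> F i \is a pOI) -> \sum_(i <- r | P i) F i \is a pOI.
Proof. move=> h; apply: (big_ind (fun p : {poly rat} => p \is a pOI)); [exact: pO0 | exact: pOD | exact: h]. Qed.
Lemma pO_prod (I : Type) (r : seq I) (P : pred I) (F : I -> {poly rat}) :
  (forall i, P i -> F i \is a pOI) -> \prod_(i <- r | P i) F i \is a pOI.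
Proof. move=> h; apply: (big_ind (fun p : {poly rat} => p \is a pOI)); [exact: pO1 | exact: pOM | exact: h]. Qed.
Lemma pO_det n (A : 'M[{poly rat}]_n) : (forall i j, A i j \is a pOI) -> \det A \is a pOI.
Proof.
move=> h; rewrite /determinant; apply: pO_sum => s _; apply: pOM.
  case: (odd_perm s); rewrite ?expr1 ?expr0; [exact: pON pO1 | exact: pO1].
exact: pO_prod.
Qed.

Lemma nar_int n : narayana n \is a pOI.
Proof.
case: n => [|n]; first exact: pO1.
rewrite /narayana /=; apply: pO_sum => k _.
apply/polyOverP => i; rewrite coefZ coefXn; apply: rpredM; last first.
  by case: (i == k); [exact: (natr_int _ 1) | exact: (natr_int _ 0)].
have hk : (k <= n)%N by have := ltn_ord k; lia.
rewrite (nar_div hk) natrM mulrAC divff ?mul1r ?pnatr_eq0 //.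
exact: natr_int.
Qed.

Definition hk m n : 'M[{poly rat}]_n := \matrix_(i < n, j < n) narayana (i + j + m).

Lemma hankelD_nz m n : hankelD m n != 0.
Proof.
have e : (hankelD m n).[1] = \det (H cb m n).
  rewrite -horner_evalE /hankelD -det_map_mx; congr (\det _).
  apply/matrixP => i j; rewrite !mxE; exact: nar_bal.
apply: (contraNneq _ (hankel1_nz m n)) => h; by rewrite -e h horner0.
Qed.

Definition ct (j : nat) : Qt := tofrac (narayana j).

Lemma toQt_hankel m n : toQt (hankelD m n) = \det (H ct m n).
Proof.
rewrite /toQt /hankelD -det_map_mx; congr (\det _).
by apply/matrixP => i j; rewrite !mxE.
Qed.

Lemma hankelD_DJ m n : (2 <= n)%N ->
     hankelD m n.-1 * hankelD m.+2 n.-1 - hankelD m.+1 n.-1 ^+ 2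
       = hankelD m n * hankelD m.+2 (n - 2).
Proof.
case: n => [|[|k]] // _; rewrite /= subn2 /=.
apply/eqP; rewrite -tofrac_eq; apply/eqP.
rewrite tofracB !tofracM ?tofracXn.
rewrite -!/(toQt _) !toQt_hankel.
rewrite (hankel_DJ (c := ct) (k := k) (m := m)) //.
by rewrite -toQt_hankel /toQt tofrac_eq0 hankelD_nz.
Qed.

Theorem mainTheorem8 :
  (* p_m(t,n) lies in Z[t] *)
  (forall m n : nat, hankelD m n \is a polyOver Num.int) /\
  (forall m n : nat, hankelD m n != 0) /\
  (forall m : nat, hankelD m 0 = 1) /\
  (forall m : nat, hankelD m 1 = narayana m) /\
  (forall m n : nat, (2 <= n)%N ->
     hankelD m n.-1 * hankelD m.+2 n.-1 - hankelD m.+1 n.-1 ^+ 2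
       = hankelD m n * hankelD m.+2 (n - 2)) /\
  (forall q : nat -> nat -> Qt,
     (forall m : nat, q m 0%N = 1) ->
     (forall m : nat, q m 1%N = toQt (narayana m)) ->
     (forall m n : nat, (2 <= n)%N ->
        q m n.-1 * q m.+2 n.-1 - q m.+1 n.-1 ^+ 2 = q m n * q m.+2 (n - 2)%N) ->
     forall m n : nat, q m n = toQt (hankelD m n)).
Proof.
split.
  move=> m n; apply: pO_det => i j; rewrite mxE; exact: nar_int.
split; first exact: hankelD_nz.
split; first by move=> m; rewrite /hankelD det_mx00.
split; first by move=> m; rewrite /hankelD det_mx11 mxE.
split; first exact: hankelD_DJ.
move=> q q0 q1 qr.
have key : forall n m, q m n = toQt (hankelD m n) /\ q m n.+1 = toQt (hankelD m n.+1).
  elim=> [|n IH] m.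
    by rewrite q0 q1 /hankelD det_mx00 det_mx11 mxE /toQt tofrac1.
  split; first by case: (IH m).
  have := qr m n.+2 isT; rewrite /= subn2 /=.
  rewrite !(proj2 (IH _)) (proj1 (IH _)).
  have hD := congr1 (@tofrac _) (hankelD_DJ m (n := n.+2) isT).
  rewrite tofracB !tofracM ?tofracXn /= subn2 /= in hD.
  rewrite /toQt hD => h.
  apply: (mulIf (x := tofrac (hankelD m.+2 n))); first by rewrite tofrac_eq0 hankelD_nz.
  by rewrite h.
by move=> m n; case: (key n m).
Qed.
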